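(* Let $\mathcal{Y}$ be a $\mathbb{Z}[X_1^{\pm1},\dots,X_n^{\pm1}]$-module and $\mathcal{G}=\{(y_1,a_1),\dots,(y_K,a_K)\}\subseteq\mathcal{Y}\rtimes\mathbb{Z}^n$. The semigroup $\langle\mathcal{G}\rangle$ is a group if and only if there exists a full-image Eulerian $\mathcal{G}$-graph that represents the neutral element $(0,0)$.
   Context: $\mathcal{Y}\rtimes\mathbb{Z}^n$ is the group of pairs $(y,a)$ with $(y,a)(y',a')=(y+X^a y',a+a')$, $X^a=X_1^{a_1}\cdots X_n^{a_n}$. A $\mathcal{G}$-graph is a finite directed multigraph $\Gamma$ whose vertex set is a finite subset of $\mathbb{Z}^n$, each vertex incident to at least one edge, each edge $e$ carries a label $\ell(e)\in\{1,\dots,K\}$, and an edge with label $i$ from $s(e)$ to $d(e)$ satisfies $d(e)=s(e)+a_i$. $\Gamma$ represents the element $\left(\sum_{e\in E(\Gamma)}X^{s(e)}\cdot y_{\ell(e)},\ \sum_{e\in E(\Gamma)}a_{\ell(e)}\right)$. $\Gamma$ is full-image if every label $1,\dots,K$ occurs on some edge, and Eulerian if it has an Euler circuit (equivalently, it is connected and every vertex has equal in- and out-degree). *)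

(* Defs.v *)
From HB Require Import structures.
From mathcomp Require Import all_boot all_order all_algebra.
Set Implicit Arguments. Unset Strict Implicit. Unset Printing Implicit Defensive.
Import GRing.Theory Num.Theory.
Local Open Scope ring_scope.

(* A Z[X_1^{+-1},...,X_n^{+-1}]-module is encoded as an abelian group Y
   (zmodType) together with n pairwise commuting additive automorphisms
   X i : Y -> Y with inverses Xinv i (the action of X_i and X_i^{-1}). *)

Definition powz (Y : Type) (f g : Y -> Y) (z : int) : Y -> Y :=
  match z with
  | Posz k => iter k f
  | Negz k => iter k.+1 g
  end.

Definition Xpow (Y : Type) (n : nat) (X Xinv : 'I_n -> Y -> Y)
  (a : 'rV[int]_n) : Y -> Y :=
  foldr (fun i h => powz (X i) (Xinv i) (a ord0 i) \o h) id (enum 'I_n).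

Definition sdmul (Y : zmodType) (n : nat) (X Xinv : 'I_n -> Y -> Y)
  (g h : Y * 'rV[int]_n) : Y * 'rV[int]_n :=
  (g.1 + Xpow X Xinv g.2 h.1, g.2 + h.2).

Inductive in_sgrp (Y : zmodType) (n K : nat) (X Xinv : 'I_n -> Y -> Y)
  (gens : 'I_K -> Y * 'rV[int]_n) : Y * 'rV[int]_n -> Prop :=
  | sgrp_gen : forall i, in_sgrp X Xinv gens (gens i)
  | sgrp_mul : forall g h, in_sgrp X Xinv gens g -> in_sgrp X Xinv gens h ->
                in_sgrp X Xinv gens (sdmul X Xinv g h).

Definition sgrp_is_group (Y : zmodType) (n K : nat) (X Xinv : 'I_n -> Y -> Y)
  (gens : 'I_K -> Y * 'rV[int]_n) : Prop :=
  in_sgrp X Xinv gens (0, 0) /\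
  forall g, in_sgrp X Xinv gens g ->
    exists h, [/\ in_sgrp X Xinv gens h,
                  sdmul X Xinv g h = (0, 0) & sdmul X Xinv h g = (0, 0)].

(* A G-graph: a finite multiset (seq) of edges; an edge is a pair
   (s(e), l(e)) of its source vertex s(e) in Z^n and its label l(e) in 'I_K
   (labels 1..K are represented by 0..K-1). The vertex set is the set of endpoints of edges
   (so each vertex is incident to some edge and it is a finite subset of Z^n). *)
Definition edge_dst (Y : Type) (n K : nat) (gens : 'I_K -> Y * 'rV[int]_n)
  (e : 'rV[int]_n * 'I_K) : 'rV[int]_n := e.1 + (gens e.2).2.

Definition graph_elt (Y : zmodType) (n K : nat) (X Xinv : 'I_n -> Y -> Y)
  (gens : 'I_K -> Y * 'rV[int]_n) (E : seq ('rV[int]_n * 'I_K))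
  : Y * 'rV[int]_n :=
  (\sum_(e <- E) Xpow X Xinv e.1 (gens e.2).1, \sum_(e <- E) (gens e.2).2).

Definition full_image (n K : nat) (E : seq ('rV[int]_n * 'I_K)) : Prop :=
  forall i : 'I_K, exists s, (s, i) \in E.

Definition eulerian (Y : Type) (n K : nat) (gens : 'I_K -> Y * 'rV[int]_n)
  (E : seq ('rV[int]_n * 'I_K)) : Prop :=
  exists c : seq ('rV[int]_n * 'I_K),
    [/\ perm_eq c E, c != [::] &
        cycle (fun e f => edge_dst gens e == f.1) c].

(* Main.v *)
Require Import Defs.
From HB Require Import structures.
From mathcomp Require Import all_boot all_order all_algebra zify.
Import GRing.Theory Num.Theory.
Local Open Scope ring_scope.


Section S.
Set Implicit Arguments. Unset Strict Implicit.
Variables (Y : zmodType) (n K : nat) (X Xinv : 'I_n -> Y -> Y).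
Hypothesis X_additive : forall i (x y : Y), X i (x + y) = X i x + X i y.
Hypothesis X_cancel : forall i, cancel (X i) (Xinv i).
Hypothesis Xinv_cancel : forall i, cancel (Xinv i) (X i).
Hypothesis X_comm : forall i j (x : Y), X i (X j x) = X j (X i x).
Variable gens : 'I_K -> Y * 'rV[int]_n.

Definition commf (f g : Y -> Y) := forall y, f (g y) = g (f y).

Lemma commf_sym f g : commf f g -> commf g f.
Proof. by move=> H y; rewrite H. Qed.

Lemma iter_commf f g k : commf f g -> commf (iter k f) g.
Proof. move=> H; elim: k => // k IH y /=; by rewrite IH H. Qed.

Lemma iter2_commf f g k l : commf f g -> commf (iter k f) (iter l g).
Proof. move=> H; apply: iter_commf; apply: commf_sym; apply: iter_commf; exact: commf_sym. Qed.

Lemma XXinv_comm i j : commf (X i) (Xinv j).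
Proof. by move=> y; apply: (can_inj (X_cancel j)); rewrite X_comm !Xinv_cancel. Qed.

Lemma XinvXinv_comm i j : commf (Xinv i) (Xinv j).
Proof. by move=> y; apply: (can_inj (X_cancel i)); rewrite Xinv_cancel XXinv_comm Xinv_cancel. Qed.

Definition P i z := powz (X i) (Xinv i) z.

Lemma P_comm i j z w : commf (P i z) (P j w).
Proof.
case: z => [k|k]; case: w => [l|l]; apply: iter2_commf => //.
- exact: XXinv_comm.
- apply: commf_sym; exact: XXinv_comm.
- exact: XinvXinv_comm.
Qed.

Lemma stepP i z y : P i (z + 1) y = X i (P i z y).
Proof.
case: z => [m|m].
  by have -> : Posz m + 1 = Posz m.+1 by lia.
case: m => [|m].
  have -> : Negz 0 + 1 = Posz 0 by lia.
  by rewrite /= Xinv_cancel.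
have -> : Negz m.+1 + 1 = Negz m by lia.
by rewrite /P /= Xinv_cancel.
Qed.

Lemma stepN i z y : P i (z - 1) y = Xinv i (P i z y).
Proof.
case: z => [m|m].
  case: m => [|m].
    by have -> : Posz 0 - 1 = Negz 0 by lia.
  have -> : Posz m.+1 - 1 = Posz m by lia.
  by rewrite /P /= X_cancel.
by have -> : Negz m - 1 = Negz m.+1 by lia.
Qed.

Lemma P_add i z w y : P i (z + w) y = P i z (P i w y).
Proof.
case: w => [k|k].
  elim: k y => [|k IH] y; first by rewrite addr0.
  have -> : z + Posz k.+1 = (z + Posz k) + 1 by lia.
  rewrite stepP IH.
  have := P_comm i i z 1 (P i (Posz k) y). by rewrite /P /= => ->.
elim: k y => [|k IH] y.
  have -> : z + Negz 0 = z - 1 by lia.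
  rewrite stepN.
  have := P_comm i i z (Negz 0) y. by rewrite /P /= => ->.
have -> : z + Negz k.+1 = (z + Negz k) - 1 by lia.
rewrite stepN IH.
have := P_comm i i z (Negz 0) (P i (Negz k) y). by rewrite /P /= => ->.
Qed.

Lemma Xinv_additive i (x y : Y) : Xinv i (x + y) = Xinv i x + Xinv i y.
Proof. by apply: (can_inj (X_cancel i)); rewrite X_additive !Xinv_cancel. Qed.

Lemma iter_additive (f : Y -> Y) k : (forall x y, f (x + y) = f x + f y) ->
  forall x y, iter k f (x + y) = iter k f x + iter k f y.
Proof. move=> H; elim: k => //= k IH x y; by rewrite IH H. Qed.

Lemma P_additive i z x y : P i z (x + y) = P i z x + P i z y.
Proof.
case: z => k; apply: iter_additive => //; exact: Xinv_additive.
Qed.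

Definition F (L : seq 'I_n) (a : 'rV[int]_n) :=
  foldr (fun i h => P i (a ord0 i) \o h) id L.

Lemma F_comm L a j w : commf (P j w) (F L a).
Proof.
elim: L => // i L IH y /=.
rewrite -IH; exact: P_comm.
Qed.

Lemma F_add L a b y : F L (a + b) y = F L a (F L b y).
Proof.
elim: L y => //= i L IH y.
rewrite mxE P_add IH; congr (P i _ _).
by rewrite -F_comm.
Qed.

Lemma F_additive L a x y : F L a (x + y) = F L a x + F L a y.
Proof. elim: L => //= i L IH; by rewrite IH P_additive. Qed.

Lemma F0 L y : F L 0 y = y.
Proof. elim: L => //= i L IH; by rewrite mxE IH. Qed.

Notation XP := (Xpow X Xinv).

Lemma Xpow_add a b y : XP (a + b) y = XP a (XP b y).
Proof. exact: F_add. Qed.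
Lemma Xpow_additive a x y : XP a (x + y) = XP a x + XP a y.
Proof. exact: F_additive. Qed.
Lemma Xpow0 y : XP 0 y = y.
Proof. exact: F0. Qed.
Lemma Xpow_y0 a : XP a 0 = 0.
Proof. by apply: (addrI (XP a 0)); rewrite -Xpow_additive !addr0. Qed.
Lemma Xpow_neg s y : XP (- s) (XP s y) = y.
Proof. by rewrite -Xpow_add addNr Xpow0. Qed.

Notation mul := (sdmul X Xinv).

Lemma mulA g h k : mul (mul g h) k = mul g (mul h k).
Proof.
rewrite /sdmul /=; congr (_, _); last by rewrite addrA.
by rewrite Xpow_additive Xpow_add addrA.
Qed.
Lemma mul1 g : mul (0, 0) g = g.
Proof. by case: g => a b; rewrite /sdmul /= Xpow0 !add0r. Qed.
Lemma mulr1 g : mul g (0, 0) = g.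
Proof. by case: g => a b; rewrite /sdmul /= Xpow_y0 !addr0. Qed.

Definition wprod (w : seq 'I_K) := foldr (fun i acc => mul (gens i) acc) (0, 0) w.

Fixpoint walk (s : 'rV[int]_n) (w : seq 'I_K) : seq ('rV[int]_n * 'I_K) :=
  match w with
  | [::] => [::]
  | i :: w' => (s, i) :: walk (s + (gens i).2) w'
  end.

Lemma wprod_cat w1 w2 : wprod (w1 ++ w2) = mul (wprod w1) (wprod w2).
Proof. elim: w1 => [|i w1 IH] /=; first by rewrite mul1. by rewrite IH mulA. Qed.

Lemma wprod1 i : wprod [:: i] = gens i.
Proof. by rewrite /= mulr1. Qed.

Lemma graph_walk s w :
  graph_elt X Xinv gens (walk s w) = (XP s (wprod w).1, (wprod w).2).
Proof.
elim: w s => [|i w IH] s.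
  by rewrite /graph_elt /= !big_nil Xpow_y0.
move: (IH (s + (gens i).2)); rewrite /graph_elt /= !big_cons => [[-> ->]].
by rewrite Xpow_additive Xpow_add.
Qed.

Definition erel := fun e f : 'rV[int]_n * 'I_K => edge_dst gens e == f.1.

Lemma walk_path s i w :
  path erel (s, i) (walk (s + (gens i).2) w) &&
  (edge_dst gens (last (s, i) (walk (s + (gens i).2) w))
     == s + (gens i).2 + (wprod w).2).
Proof.
elim: w s i => [|j w IH] s i /=; first by rewrite addr0.
have /andP [H1 H2] := IH (s + (gens i).2) j.
by rewrite /erel /= eqxx H1 /= (eqP H2) addrA.
Qed.

Lemma walk_cycle s w : w != [::] -> (wprod w).2 = 0 -> cycle erel (walk s w).
Proof.
case: w => [//|i w] _ /= H.
rewrite rcons_path; have /andP [-> /eqP E] := walk_path s i w.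
by rewrite /= /erel E /= -addrA H addr0.
Qed.

Lemma path_walk x p : path erel x p -> x :: p = walk x.1 (map snd (x :: p)).
Proof.
elim: p x => [|y p IH] [s i] /=; first by [].
move=> /andP [/eqP He Hp]; rewrite /edge_dst /= in He.
by rewrite He (IH _ Hp).
Qed.

Lemma graph_perm E1 E2 : perm_eq E1 E2 ->
  graph_elt X Xinv gens E1 = graph_elt X Xinv gens E2.
Proof. by move=> H; rewrite /graph_elt (perm_big _ H) (perm_big _ H). Qed.

Lemma cycle_wprod c : c != [::] -> cycle erel c ->
  graph_elt X Xinv gens c = (0, 0) -> wprod (map snd c) = (0, 0).
Proof.
case: c => [//|x p] _; rewrite /cycle rcons_path => /andP [Hp _].
have Hw := path_walk Hp.
set w := map snd (x :: p) in Hw *.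
rewrite Hw graph_walk.
case: (wprod w) => u v [H1 ->].
by rewrite -(Xpow_neg x.1 u) H1 Xpow_y0.
Qed.

Lemma wprod_sgrp w : w != [::] -> in_sgrp X Xinv gens (wprod w).
Proof.
elim: w => [//|i w IH] _.
case: w IH => [|j w] IH; first by rewrite wprod1; exact: sgrp_gen.
apply: sgrp_mul; first exact: sgrp_gen.
exact: IH.
Qed.

Lemma sgrp_word g : in_sgrp X Xinv gens g -> exists2 w, w != [::] & wprod w = g.
Proof.
elim => [i|g1 h1 _ [w1 n1 e1] _ [w2 n2 e2]].
  by exists [:: i]; rewrite ?wprod1.
exists (w1 ++ w2); first by destruct w1.
by rewrite wprod_cat e1 e2.
Qed.

Lemma mem_walk s w i : i \in w -> exists s', (s', i) \in walk s w.
Proof.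
elim: w s => [//|j w IH] s; rewrite inE => /orP [/eqP ->|Hi].
  by exists s; rewrite inE eqxx.
have [s' Hs'] := IH (s + (gens j).2) Hi.
by exists s'; rewrite /= inE Hs' orbT.
Qed.


Lemma main_sec : sgrp_is_group X Xinv gens <->
  exists E : seq ('rV[int]_n * 'I_K),
    [/\ full_image E, eulerian gens E & graph_elt X Xinv gens E = (0, 0)].
Proof.
split.
  move=> [H0 Hinv].
  have words : forall L : seq 'I_K, exists W, wprod W = (0, 0) /\ {subset L <= W}.
    elim => [|i L [W [HW HL]]]; first by exists [::].
    have [h [sh e1 _]] := Hinv (gens i) (sgrp_gen X Xinv gens i).
    have [u _ eu] := sgrp_word sh.
    exists ((i :: u) ++ W); split.
      by rewrite wprod_cat HW mulr1 /= eu.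
    move=> x; rewrite inE => /orP [/eqP ->|Hx]; first by rewrite inE eqxx.
    by rewrite mem_cat HL ?orbT.
  have [[|i0 w0] // _ _] := sgrp_word H0.
  have [W [HW HL]] := words (enum 'I_K).
  have Wi0 : i0 \in W by apply: HL; rewrite mem_enum.
  have Wn : W != [::] by case: (W) Wi0.
  exists (walk 0 W); split.
  - move=> i; apply: mem_walk; apply: HL; by rewrite mem_enum.
  - exists (walk 0 W); split => //.
      by case: (W) Wn.
    by apply: walk_cycle => //; rewrite HW.
  - by rewrite graph_walk HW /= Xpow0.
move=> [E [FI [c [pc cn cc]] GE]].
have Gc : forall c', perm_eq c' c -> cycle erel c' -> c' != [::] ->
    wprod (map snd c') = (0, 0).
  move=> c' p' cy' n'; apply: cycle_wprod => //.
  by rewrite (graph_perm p') (graph_perm pc).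
have gen_inv : forall i, exists h, [/\ in_sgrp X Xinv gens h,
      mul (gens i) h = (0, 0) & mul h (gens i) = (0, 0)].
  move=> i; have [s Hs] := FI i.
  have Hc : (s, i) \in c by rewrite (perm_mem pc).
  have Hj : (index (s, i) c < size c)%N by rewrite index_mem.
  set c1 := rot (index (s, i) c) c.
  have Hrot : c1 =
      (s, i) :: (drop (index (s, i) c).+1 c ++ take (index (s, i) c) c).
    by rewrite /c1 /rot (drop_nth (s, i) Hj) nth_index.
  set r := map snd (drop (index (s, i) c).+1 c ++ take (index (s, i) c) c).
  have p1 : perm_eq c1 c by rewrite perm_rot.
  have cy1 : cycle erel c1 by rewrite rot_cycle.
  have n1 : c1 != [::] by rewrite Hrot.
  have H1 := Gc c1 p1 cy1 n1.
  rewrite Hrot /= -/r in H1.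
  have p2 : perm_eq (rot 1 c1) c by rewrite perm_rot.
  have cy2 : cycle erel (rot 1 c1) by rewrite rot_cycle.
  have n2 : rot 1 c1 != [::] by rewrite -size_eq0 size_rot size_eq0.
  have H2 := Gc _ p2 cy2 n2.
  rewrite map_rot Hrot /= -/r rot1_cons -cats1 wprod_cat wprod1 in H2.
  clearbody r; case: r H1 H2 => [|j r'] H1 H2.
    rewrite /= mulr1 in H1.
    exists (gens i); split; [exact: sgrp_gen | by rewrite H1 mul1 | by rewrite H1 mul1].
  exists (wprod (j :: r')); split => //.
  exact: wprod_sgrp.
split.
  case: c pc cn cc Gc gen_inv => [//|x p] _ _ _ _ gen_inv.
  have [h [sh e1 _]] := gen_inv x.2.
  rewrite -e1; apply: sgrp_mul => //; exact: sgrp_gen.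
move=> g; elim => [i|g1 h1 s1 [k1 [sk1 a1 b1]] s2 [k2 [sk2 a2 b2]]].
  exact: gen_inv.
exists (mul k2 k1); split.
- exact: sgrp_mul.
- by rewrite mulA -(mulA h1) a2 mul1 a1.
- by rewrite mulA -(mulA k1) b1 mul1 b2.
Qed.
End S.

Theorem mainTheorem3 (Y : zmodType) (n K : nat) (X Xinv : 'I_n -> Y -> Y)
  (X_additive : forall i (x y : Y), X i (x + y) = X i x + X i y)
  (X_cancel : forall i, cancel (X i) (Xinv i))
  (Xinv_cancel : forall i, cancel (Xinv i) (X i))
  (X_comm : forall i j (x : Y), X i (X j x) = X j (X i x))
  (gens : 'I_K -> Y * 'rV[int]_n) :
  sgrp_is_group X Xinv gens <->
  exists E : seq ('rV[int]_n * 'I_K),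
    [/\ full_image E, eulerian gens E & graph_elt X Xinv gens E = (0, 0)].
Proof. exact: main_sec. Qed.
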